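(* On $\mathbb{R}^6$ with coordinates $(q_1,q_2,q_3,p_1,p_2,p_3)$ let $J_2=\begin{pmatrix}0&I_3\\-I_3&0\end{pmatrix}$ and let $J_3$ be the antisymmetric matrix (rows/columns ordered $q_1,q_2,q_3,p_1,p_2,p_3$) with upper-triangular entries $(J_3)_{12}=(J_3)_{13}=(J_3)_{14}=-e^{p_1}$, $(J_3)_{15}=(J_3)_{16}=0$, $(J_3)_{23}=-e^{p_2}$, $(J_3)_{24}=-e^{q_2-q_1}$, $(J_3)_{25}=-e^{p_2}+e^{q_2-q_1}$, $(J_3)_{26}=0$, $(J_3)_{34}=-e^{q_2-q_1}$, $(J_3)_{35}=e^{q_2-q_1}-e^{q_3-q_2}$, $(J_3)_{36}=-e^{p_3}+e^{q_3-q_2}$, $(J_3)_{45}=e^{q_2-q_1}$, $(J_3)_{46}=0$, $(J_3)_{56}=e^{q_3-q_2}$. Let $\mathcal{N}=J_2J_3^{-1}$ and $J_1=\mathcal{N}J_2$. Let $\Phi:\mathbb{R}^6\to\mathbb{R}^5$ be given by $u_1=-e^{p_1}$, $u_3=-e^{p_2}$, $u_5=-e^{p_3}$, $u_2=e^{q_2-q_1}$, $u_4=e^{q_3-q_2}$. Then $\Phi$ maps $J_1$ to the Poisson bracket $\pi_1$ on $\mathbb{R}^5$ (i.e. $\{f\circ\Phi,g\circ\Phi\}_{J_1}=\{f,g\}_{\pi_1}\circ\Phi$) given by $\{u_1,u_2\}=u_2$, $\{u_1,u_3\}=-u_2$, $\{u_1,u_4\}=\frac{u_2u_4}{u_3}$,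 $\{u_1,u_5\}=-\frac{u_2u_4}{u_3}$, $\{u_2,u_3\}=u_2$, $\{u_2,u_4\}=-\frac{u_2u_4}{u_3}$, $\{u_2,u_5\}=\frac{u_2u_4}{u_3}$, $\{u_3,u_4\}=u_4$, $\{u_3,u_5\}=-u_4$, $\{u_4,u_5\}=u_4$.
   Context: A bracket given by an antisymmetric matrix $J$ on $\mathbb{R}^m$ with coordinates $x_k$ is $\{f,g\}_J=\sum_{k,l}J_{kl}\,\partial_{x_k}f\,\partial_{x_l}g$. *)

(* Defs.v *)
From HB Require Import structures.
From mathcomp Require Import all_boot all_order all_algebra.
From mathcomp Require Import all_classical all_reals all_analysis.
Set Implicit Arguments. Unset Strict Implicit. Unset Printing Implicit Defensive.
Import Order.TTheory GRing.Theory Num.Theory.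
Import numFieldNormedType.Exports.
Local Open Scope ring_scope.

Section Defs.
Variable R : realType.

Definition q1 (x : 'rV[R]_6) := x 0 (inord 0).
Definition q2 (x : 'rV[R]_6) := x 0 (inord 1).
Definition q3 (x : 'rV[R]_6) := x 0 (inord 2).
Definition p1 (x : 'rV[R]_6) := x 0 (inord 3).
Definition p2 (x : 'rV[R]_6) := x 0 (inord 4).
Definition p3 (x : 'rV[R]_6) := x 0 (inord 5).

Definition basis_vec (n : nat) (k : 'I_n) : 'rV[R]_n := delta_mx 0 k.

Definition partial (n : nat) (k : 'I_n) (f : 'rV[R]_n -> R) (x : 'rV[R]_n) : R :=
  'D_(basis_vec k) f x.

Definition bracket (n : nat) (J : 'rV[R]_n -> 'M[R]_n) (f g : 'rV[R]_n -> R)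
  (x : 'rV[R]_n) : R :=
  \sum_(k < n) \sum_(l < n) J x k l * partial k f x * partial l g x.

Definition J2 (x : 'rV[R]_6) : 'M[R]_6 :=
  \matrix_(i < 6, j < 6)
    (if (i < 3)%N && (j == i + 3 :> nat) then 1
     else if (j < 3)%N && (i == j + 3 :> nat) then -1 else 0).

(* Upper-triangular entries (1-based in the paper, 0-based here). *)
Definition J3_up (x : 'rV[R]_6) (i j : nat) : R :=
  let s := expR (q2 x - q1 x) in
  let t := expR (q3 x - q2 x) in
  match i, j with
  | 0, 1 | 0, 2 | 0, 3 => - expR (p1 x)
  | 0, 4 | 0, 5 => 0
  | 1, 2 => - expR (p2 x)
  | 1, 3 => - s
  | 1, 4 => - expR (p2 x) + s
  | 1, 5 => 0
  | 2, 3 => - s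
  | 2, 4 => s - t
  | 2, 5 => - expR (p3 x) + t
  | 3, 4 => s
  | 3, 5 => 0
  | 4, 5 => t
  | _, _ => 0
  end.

Definition J3 (x : 'rV[R]_6) : 'M[R]_6 :=
  \matrix_(i < 6, j < 6)
    (if (i < j)%N then J3_up x i j
     else if (j < i)%N then - J3_up x j i else 0).

Definition Nrec (x : 'rV[R]_6) : 'M[R]_6 := J2 x *m invmx (J3 x).
Definition J1 (x : 'rV[R]_6) : 'M[R]_6 := Nrec x *m J2 x.

(* Phi : R^6 -> R^5 ; coordinates u1..u5 are indices 0..4. *)
Definition Phi (x : 'rV[R]_6) : 'rV[R]_5 :=
  \row_(i < 5)
    match val i with
    | 0 => - expR (p1 x)
    | 1 => expR (q2 x - q1 x)
    | 2 => - expR (p2 x)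
    | 3 => expR (q3 x - q2 x)
    | _ => - expR (p3 x)
    end.

Definition pi1_up (u : 'rV[R]_5) (i j : nat) : R :=
  let u2 := u 0 (inord 1) in
  let u3 := u 0 (inord 2) in
  let u4 := u 0 (inord 3) in
  match i, j with
  | 0, 1 => u2
  | 0, 2 => - u2
  | 0, 3 => u2 * u4 / u3
  | 0, 4 => - (u2 * u4 / u3)
  | 1, 2 => u2
  | 1, 3 => - (u2 * u4 / u3)
  | 1, 4 => u2 * u4 / u3
  | 2, 3 => u4
  | 2, 4 => - u4
  | 3, 4 => u4
  | _, _ => 0
  end.

Definition pi1 (u : 'rV[R]_5) : 'M[R]_5 :=
  \matrix_(i < 5, j < 5)
    (if (i < j)%N then pi1_up u i j
     else if (j < i)%N then - pi1_up u j i else 0).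

End Defs.

(* Main.v *)
Require Import Defs.
From HB Require Import structures.
From mathcomp Require Import all_boot all_order all_algebra.
From mathcomp Require Import all_classical all_reals all_analysis.
From mathcomp Require Import ring lra.
Import Order.TTheory GRing.Theory Num.Theory.
Import numFieldNormedType.Exports.
Local Open Scope ring_scope.

Section Main.
Variable R : realType.


Lemma dcoord n (k : 'I_n) (x v : 'rV[R]_n) :
  'D_v (fun t : 'rV[R]_n => t 0 k) x = v 0 k.
Proof.
rewrite deriveE; last exact: differentiable_coord.
have @f : {linear 'rV[R]_n -> R}.
  by exists (fun N : 'rV[R]_n => N 0 k); do 2![eexists]; do ?[constructor];
     rewrite ?mxE// => ? *; rewrite ?mxE//; move=> ?; rewrite !mxE.
rewrite (_ : (fun _ => _) = f) // diff_lin //; exact: coord_continuous.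
Qed.

Lemma dexp n (u : 'rV[R]_n -> R) x v : differentiable u x ->
  'D_v (fun t => expR (u t)) x = expR (u x) * 'D_v u x.
Proof.
move=> du.
have de : differentiable (@expR R) (u x) by apply/derivable1_diffP/derivable_expR.
rewrite (_ : (fun t => expR (u t)) = expR \o u) //.
rewrite deriveE; last exact: differentiable_comp.
rewrite diff_comp // /= -(deriveE _ du).
set w := 'D_v u x.
rewrite -[w in LHS]mulr1 -[w * 1]/(w *: (1 : R)) linearZ /= -deriveE //.
by rewrite derive_val; apply: mulrC.
Qed.

Lemma dlin n (f : 'rV[R]_n -> R) y w : differentiable f y ->
  'd f y w = \sum_(i < n) w 0 i * partial i f y.
Proof.
move=> df; rewrite {1}(row_sum_delta w) linear_sum; apply: eq_bigr => i _.
by rewrite linearZ /= /partial /basis_vec deriveE.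
Qed.


Definition hfun (i : nat) (t : 'rV[R]_6) : R :=
  match i with
  | 0 => - expR (p1 t)
  | 1 => expR (q2 t - q1 t)
  | 2 => - expR (p2 t)
  | 3 => expR (q3 t - q2 t)
  | _ => - expR (p3 t)
  end.

Lemma Phi_h t (i : 'I_5) : Phi t 0 i = hfun i t.
Proof. by rewrite mxE. Qed.

Lemma diff_expc n (u : 'rV[R]_n -> R) x : differentiable u x ->
  differentiable (fun t => expR (u t)) x.
Proof.
move=> du.
have de : differentiable (@expR R) (u x) by apply/derivable1_diffP/derivable_expR.
exact: (@differentiable_comp _ _ _ _ u expR).
Qed.

Lemma dh_diff i x : differentiable (hfun i) x.
Proof.
case: i => [|[|[|[|i]]]].
- apply: (@differentiableN _ _ _ (fun t => expR (p1 t))).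
  by apply: diff_expc; apply: differentiable_coord.
- apply: diff_expc; apply: differentiableB; apply: differentiable_coord.
- apply: (@differentiableN _ _ _ (fun t => expR (p2 t))).
  by apply: diff_expc; apply: differentiable_coord.
- apply: diff_expc; apply: differentiableB; apply: differentiable_coord.
- apply: (@differentiableN _ _ _ (fun t => expR (p3 t))).
  by apply: diff_expc; apply: differentiable_coord.
Qed.

Lemma Phi_diff x : differentiable (@Phi R) x.
Proof.
have -> : @Phi R = \sum_(i < 5) (fun t => hfun i t *: (delta_mx 0 i : 'rV[R]_5)).
  apply/funext => t; rewrite fct_sumE {1}(row_sum_delta (Phi t)).
  by apply: eq_bigr => i _; rewrite Phi_h.
apply: differentiable_sum => i; apply: differentiableZl; exact: dh_diff.
Qed.


Definition amat (a b c s t : R) (i k : nat) : R :=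
  match i, k with
  | 0, 3 => - a | 1, 0 => - s | 1, 1 => s | 2, 4 => - b
  | 3, 1 => - t | 3, 2 => t | 4, 5 => - c | _, _ => 0 end.

Lemma inordO (m : nat) (H : (m < 6)%N) : (inord m : 'I_6) = Ordinal H.
Proof. by apply: val_inj; rewrite /= inordK. Qed.

Lemma dh (i : 'I_5) (k : 'I_6) x :
  'D_(delta_mx 0 k) (hfun i) x =
  amat (expR (p1 x)) (expR (p2 x)) (expR (p3 x)) (expR (q2 x - q1 x))
       (expR (q3 x - q2 x)) i k.
Proof.
have dc : forall (m : 'I_6), differentiable (fun t : 'rV[R]_6 => t 0 m) x.
  by move=> m; apply: differentiable_coord.
case: i => [[|[|[|[|[|i]]]]] Hi] //=.
- rewrite (_ : hfun 0 = - (fun t => expR (p1 t))) //.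
  rewrite deriveN; last by apply: diff_derivable; apply: diff_expc; exact: dc.
  rewrite dexp; last exact: dc.
  rewrite dcoord mxE (@inordO 3 isT).
  by case: k => [[|[|[|[|[|[|k]]]]]] Hk] //=; rewrite ?mulr0 ?mulr1 ?oppr0.
- rewrite /hfun (@dexp _ (fun t => q2 t - q1 t)); last first.
    by apply: differentiableB; exact: dc.
  rewrite (_ : (fun t => q2 t - q1 t) = q2 (R:=R) - q1 (R:=R)) //.
  rewrite deriveB; try by apply: diff_derivable; exact: dc.
  rewrite !dcoord !mxE (@inordO 0 isT) (@inordO 1 isT).
  by case: k => [[|[|[|[|[|[|k]]]]]] Hk] //=; ring.
- rewrite (_ : hfun 2 = - (fun t => expR (p2 t))) //.
  rewrite deriveN; last by apply: diff_derivable; apply: diff_expc; exact: dc.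
  rewrite dexp; last exact: dc.
  rewrite dcoord mxE (@inordO 4 isT).
  by case: k => [[|[|[|[|[|[|k]]]]]] Hk] //=; rewrite ?mulr0 ?mulr1 ?oppr0.
- rewrite /hfun (@dexp _ (fun t => q3 t - q2 t)); last first.
    by apply: differentiableB; exact: dc.
  rewrite (_ : (fun t => q3 t - q2 t) = q3 (R:=R) - q2 (R:=R)) //.
  rewrite deriveB; try by apply: diff_derivable; exact: dc.
  rewrite !dcoord !mxE (@inordO 1 isT) (@inordO 2 isT).
  by case: k => [[|[|[|[|[|[|k]]]]]] Hk] //=; ring.
- rewrite (_ : hfun 4 = - (fun t => expR (p3 t))) //.
  rewrite deriveN; last by apply: diff_derivable; apply: diff_expc; exact: dc.
  rewrite dexp; last exact: dc.
  rewrite dcoord mxE (@inordO 5 isT).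
  by case: k => [[|[|[|[|[|[|k]]]]]] Hk] //=; rewrite ?mulr0 ?mulr1 ?oppr0.
Qed.

Lemma partial_comp (f : 'rV[R]_5 -> R) x (k : 'I_6) : differentiable f (Phi x) ->
  partial k (f \o @Phi R) x =
  \sum_(i < 5) amat (expR (p1 x)) (expR (p2 x)) (expR (p3 x))
       (expR (q2 x - q1 x)) (expR (q3 x - q2 x)) i k * partial i f (Phi x).
Proof.
move=> df; have dP := Phi_diff x.
rewrite /partial /basis_vec deriveE; last exact: differentiable_comp.
rewrite diff_comp // /= dlin //.
apply: eq_bigr => i _; congr (_ * _).
rewrite -deriveE //.
rewrite derive_mx; last exact: diff_derivable.
rewrite mxE -dh; congr ('D_ _ _ _).
by apply/funext => t; rewrite Phi_h.
Qed.

Lemma bracket_pull (J : 'rV[R]_6 -> 'M[R]_6) F G x (A : 'M[R]_(5, 6))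
  (df dg : 'I_5 -> R) :
  (forall k, partial k F x = \sum_i A i k * df i) ->
  (forall k, partial k G x = \sum_i A i k * dg i) ->
  bracket J F G x = \sum_i \sum_j (A *m J x *m A^T) i j * df i * dg j.
Proof.
move=> hF hG; rewrite /bracket.
transitivity (\sum_(k < 6) \sum_(l < 6) \sum_(i < 5) \sum_(j < 5)
   J x k l * (A i k * df i) * (A j l * dg j)).
  apply: eq_bigr => k _; apply: eq_bigr => l _.
  rewrite hF hG -mulrA big_distrl big_distrr; apply: eq_bigr => i _.
  rewrite /= big_distrr big_distrr; apply: eq_bigr => j _ /=; ring.
symmetry.
transitivity (\sum_(i < 5) \sum_(j < 5) \sum_(k < 6) \sum_(l < 6)
   J x k l * (A i k * df i) * (A j l * dg j)).
  apply: eq_bigr => i _; apply: eq_bigr => j _.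
  rewrite !mxE big_distrl big_distrl /= exchange_big; apply: eq_bigr => l _.
  rewrite !mxE big_distrl big_distrl big_distrl /=; apply: eq_bigr => k _.
  by rewrite ?mxE; ring.
transitivity (\sum_(i < 5) \sum_(k < 6) \sum_(j < 5) \sum_(l < 6)
   J x k l * (A i k * df i) * (A j l * dg j)).
  by apply: eq_bigr => i _; rewrite exchange_big.
rewrite exchange_big; apply: eq_bigr => k _.
transitivity (\sum_(i < 5) \sum_(l < 6) \sum_(j < 5)
   J x k l * (A i k * df i) * (A j l * dg j)).
  by apply: eq_bigr => i _; rewrite exchange_big.
by rewrite exchange_big.
Qed.


Definition up3 (a b c s t : R) (i j : nat) : R :=
  match i, j with
  | 0, 1 | 0, 2 | 0, 3 => - a
  | 0, 4 | 0, 5 => 0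
  | 1, 2 => - b
  | 1, 3 => - s
  | 1, 4 => - b + s
  | 1, 5 => 0
  | 2, 3 => - s
  | 2, 4 => s - t
  | 2, 5 => - c + t
  | 3, 4 => s
  | 3, 5 => 0
  | 4, 5 => t
  | _, _ => 0
  end.

Definition M3 a b c s t : 'M[R]_6 :=
  \matrix_(i < 6, j < 6)
    (if (i < j)%N then up3 a b c s t i j
     else if (j < i)%N then - up3 a b c s t j i else 0).

Definition cnum (a b c s t : R) (i j : nat) : R :=
  match i, j with
  | 0, 1 => c*s
  | 0, 2 => - s*t
  | 0, 3 => b*c - c*s + s*t
  | 0, 4 => - c*s + s*t
  | 0, 5 => s*t
  | 1, 0 => - c*s
  | 1, 2 => a*t
  | 1, 3 => - a*t
  | 1, 4 => a*c - a*t
  | 1, 5 => - a*t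
  | 2, 0 => s*t
  | 2, 1 => - a*t
  | 2, 3 => a*t
  | 2, 5 => a*b
  | 3, 0 => - b*c + c*s - s*t
  | 3, 1 => a*t
  | 3, 2 => - a*t
  | 3, 4 => - a*c + a*t
  | 3, 5 => a*t - a*b
  | 4, 0 => c*s - s*t
  | 4, 1 => - a*c + a*t
  | 4, 3 => a*c - a*t
  | 4, 5 => - a*b
  | 5, 0 => - s*t
  | 5, 1 => a*t
  | 5, 2 => - a*b
  | 5, 3 => - a*t + a*b
  | 5, 4 => a*b
  | _, _ => 0
  end.

Definition Cm a b c s t : 'M[R]_6 :=
  \matrix_(i < 6, j < 6) (cnum a b c s t i j / (a * b * c)).

Lemma M3C a b c s t : a != 0 -> b != 0 -> c != 0 ->
  M3 a b c s t *m Cm a b c s t = 1%:M.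
Proof.
move=> a0 b0 c0.
apply/matrixP => i j; rewrite !mxE !big_ord_recr big_ord0 /= !mxE /=.
case: i => [[|[|[|[|[|[|i]]]]]] Hi] //;
case: j => [[|[|[|[|[|[|j]]]]]] Hj] //=; by field; rewrite a0 b0 c0.
Qed.

Definition Am a b c s t : 'M[R]_(5, 6) := \matrix_(i < 5, k < 6) amat a b c s t i k.
Definition emat (a b c s t : R) (i k : nat) : R :=
  match i, k with
  | 0, 0 => a | 1, 3 => - s | 1, 4 => s | 2, 1 => b
  | 3, 4 => - t | 3, 5 => t | 4, 2 => c | _, _ => 0 end.
Definition Em a b c s t : 'M[R]_(5, 6) := \matrix_(i < 5, k < 6) emat a b c s t i k.
Definition Dm a b c s t : 'M[R]_(6, 5) := \matrix_(k < 6, i < 5) - emat a b c s t i k.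
Definition pup (b s t : R) (i j : nat) : R :=
  match i, j with
  | 0, 1 => s
  | 0, 2 => - s
  | 0, 3 => s * t / (- b)
  | 0, 4 => - (s * t / (- b))
  | 1, 2 => s
  | 1, 3 => - (s * t / (- b))
  | 1, 4 => s * t / (- b)
  | 2, 3 => t
  | 2, 4 => - t
  | 3, 4 => t
  | _, _ => 0
  end.
Definition Pm b s t : 'M[R]_5 :=
  \matrix_(i < 5, j < 5)
    (if (i < j)%N then pup b s t i j
     else if (j < i)%N then - pup b s t j i else 0).

Lemma AJ2 x a b c s t : Am a b c s t *m J2 x = Em a b c s t.
Proof.
apply/matrixP => i j; rewrite !mxE !big_ord_recr big_ord0 /= !mxE /=.
case: i => [[|[|[|[|[|i]]]]] Hi] //;
case: j => [[|[|[|[|[|[|j]]]]]] Hj] //=; by ring.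
Qed.

Lemma J2A x a b c s t : J2 x *m (Am a b c s t)^T = Dm a b c s t.
Proof.
apply/matrixP => i j; rewrite !mxE !big_ord_recr big_ord0 /= !mxE /=.
case: j => [[|[|[|[|[|j]]]]] Hj] //;
case: i => [[|[|[|[|[|[|i]]]]]] Hi] //=; by ring.
Qed.

Lemma ECD a b c s t : a != 0 -> b != 0 -> c != 0 ->
  Em a b c s t *m Cm a b c s t *m Dm a b c s t = Pm b s t.
Proof.
move=> a0 b0 c0.
apply/matrixP => i j; rewrite !mxE !big_ord_recr big_ord0 /= !mxE /=.
rewrite !big_ord_recr !big_ord0 /= !mxE /=.
case: i => [[|[|[|[|[|i]]]]] Hi] //;
case: j => [[|[|[|[|[|j]]]]] Hj] //=; by field; rewrite ?a0 ?b0 ?c0 ?oppr_eq0.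
Qed.

Lemma J3M (x : 'rV[R]_6) : J3 x = M3 (expR (p1 x)) (expR (p2 x)) (expR (p3 x))
  (expR (q2 x - q1 x)) (expR (q3 x - q2 x)).
Proof. by apply/matrixP => i j; rewrite !mxE. Qed.

Lemma Phi1 (x : 'rV[R]_6) : Phi x 0 (inord 1) = expR (q2 x - q1 x).
Proof. by rewrite mxE /= inordK. Qed.
Lemma Phi2 (x : 'rV[R]_6) : Phi x 0 (inord 2) = - expR (p2 x).
Proof. by rewrite mxE /= inordK. Qed.
Lemma Phi3 (x : 'rV[R]_6) : Phi x 0 (inord 3) = expR (q3 x - q2 x).
Proof. by rewrite mxE /= inordK. Qed.

Lemma pi1P (x : 'rV[R]_6) : pi1 (Phi x) = Pm (expR (p2 x)) (expR (q2 x - q1 x)) (expR (q3 x - q2 x)).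
Proof.
apply/matrixP => i j; rewrite !mxE /pi1_up /= Phi1 Phi2 Phi3 //.
Qed.

Lemma alg_main (x : 'rV[R]_6) a b c s t : a != 0 -> b != 0 -> c != 0 ->
  Am a b c s t *m (J2 x *m invmx (M3 a b c s t) *m J2 x) *m (Am a b c s t)^T
  = Pm b s t.
Proof.
move=> a0 b0 c0.
have hC := @M3C a b c s t a0 b0 c0.
have [uM _] := mulmx1_unit hC.
have -> : invmx (M3 a b c s t) = Cm a b c s t.
  by rewrite -[invmx _]mulmx1 -hC mulmxA mulVmx // mul1mx.
rewrite !mulmxA AJ2 -mulmxA J2A.
exact: ECD.
Qed.
End Main.

Theorem mainTheorem3 (R : realType) (f g : 'rV[R]_5 -> R) (x : 'rV[R]_6) :
  differentiable f (Phi x) -> differentiable g (Phi x) ->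
  bracket (@J1 R) (f \o @Phi R) (g \o @Phi R) x = bracket (@pi1 R) f g (Phi x).
Proof.
move=> df dg.
set a := expR (p1 x); set b := expR (p2 x); set c := expR (p3 x).
set s := expR (q2 x - q1 x); set t := expR (q3 x - q2 x).
rewrite (@bracket_pull R (@J1 R) _ _ x (@Am R a b c s t)
  (fun i => partial i f (Phi x)) (fun i => partial i g (Phi x))); last first.
- by move=> k; rewrite partial_comp //; apply: eq_bigr => i _; rewrite mxE.
- by move=> k; rewrite partial_comp //; apply: eq_bigr => i _; rewrite mxE.
have ha : a != 0 by rewrite /a expR_eq0.
have hb : b != 0 by rewrite /b expR_eq0.
have hc : c != 0 by rewrite /c expR_eq0.
rewrite /J1 /Nrec J3M -/a -/b -/c -/s -/t alg_main // -pi1P.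
by [].
Qed.
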